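(* The subgroup $E$ is $S_0$-invariant, and every proper $S_0$-invariant subgroup of $G$ is contained in $E$; thus $E$ is the unique maximal proper $S_0$-invariant subgroup of $G$. Moreover, if $H$ is a proper $S_0$-invariant subgroup of $E$, then in the reduced word of every element of $H$ each letter $a_i$ occurs either not at all or at least twice.
   Context: Let $G=\mathbb Z_2^{*\infty}$ be the free product of countably many copies of $\mathbb Z_2=\mathbb Z/2\mathbb Z$, with canonical generators $a_1,a_2,\dots$ ($a_i^2=e$). Every element has a unique reduced word in the $a_i$ (no two consecutive equal letters). $E\le G$ is the subgroup of all elements whose reduced word has even length. $S_0\subseteq\mathrm{End}(G)$ is the subsemigroup generated by: (1) for every $n\in\mathbb N$ and every choice of indices $i(1),\dots,i(n)$, the endomorphism with $a_k\mapsto a_{i(k)}$ for $1\le k\le n$ and $a_k\mapsto a_k$ for $k>n$ (''finite identification of letters''); (2) for every $k$, the conjugation $w\mapsto a_kwa_k$. A subgroup $H\le G$ is $S_0$-invariant if $\phi(H)\subseteq H$ for all $\phi\in S_0$. *)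

(* Defs.v *)
From mathcomp Require Import all_boot.
Set Implicit Arguments. Unset Strict Implicit. Unset Printing Implicit Defensive.

(* G = Z_2^{*oo}.  Generator a_i is encoded by the letter i : nat (letters
   are indexed from 0 instead of 1).  An element of G is represented by its
   unique reduced word: a list of letters with no two consecutive equal. *)
Definition word := seq nat.

Fixpoint reduced (w : word) : bool :=
  match w with
  | x :: ((y :: _) as w') => (x != y) && reduced w'
  | _ => true
  end.

(* free reduction using a_i^2 = e *)
Definition push (x : nat) (w : word) : word :=
  match w with
  | y :: w' => if x == y then w' else x :: w
  | [::] => [:: x]
  end.
Definition red (w : word) : word := foldr push [::] w.

Definition gmul (u v : word) : word := red (u ++ v).
Definition ginv (u : word) : word := red (rev u).
Definition gone : word := [::].

Definition is_subgroup (H : word -> Prop) : Prop :=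
  [/\ (forall w, H w -> reduced w),
      H gone,
      (forall u v, H u -> H v -> H (gmul u v)) &
      (forall u, H u -> H (ginv u))].

Definition is_proper (H : word -> Prop) : Prop :=
  exists w, reduced w /\ ~ H w.

Definition letter_endo (s : nat -> nat) (w : word) : word := red (map s w).

Definition fin_ident (n : nat) (i : nat -> nat) : word -> word :=
  letter_endo (fun k => if k < n then i k else k).

Definition conj_gen (k : nat) (w : word) : word := red (k :: w ++ [:: k]).

Inductive inS0 : (word -> word) -> Prop :=
  | S0_ident n i : inS0 (fin_ident n i)
  | S0_conj k : inS0 (conj_gen k)
  | S0_comp f g : inS0 f -> inS0 g -> inS0 (fun w => f (g w)).

Definition S0_invariant (H : word -> Prop) : Prop :=
  forall phi, inS0 phi -> forall w, H w -> H (phi w).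

Definition Evn (w : word) : Prop := reduced w /\ ~~ odd (size w).

(* Main.v *)
Require Import Defs.
From mathcomp Require Import all_boot.
Set Implicit Arguments. Unset Strict Implicit.

Lemma reduced_tail x w : reduced (x :: w) -> reduced w.
Proof. by case: w => //= y w /andP[]. Qed.

Lemma push_reduced x w : reduced w -> reduced (push x w).
Proof.
case: w => //= y w Hw; case: eqP => [_|/eqP ne]; first exact: reduced_tail Hw.
by rewrite /= ne.
Qed.

Lemma red_reduced w : reduced (red w).
Proof. elim: w => //= x w IH; exact: push_reduced. Qed.

Lemma red_id w : reduced w -> red w = w.
Proof.
elim: w => //= x w IH Hw; rewrite IH; last exact: reduced_tail Hw.
move: Hw; case: w {IH} => //= y w /andP[ne _]; by rewrite (negbTE ne).
Qed.

Lemma odd_size_push x w : odd (size (push x w)) = ~~ odd (size w).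
Proof. case: w => //= y w; case: eqP => //= _; by rewrite negbK. Qed.

Lemma odd_size_red w : odd (size (red w)) = odd (size w).
Proof. elim: w => //= x w IH; by rewrite odd_size_push IH. Qed.

Lemma red_nseq m j : red (nseq m j) = if odd m then [:: j] else [::].
Proof.
elim: m => //= m IH; rewrite IH; case: (odd m) => //=; by rewrite eqxx.
Qed.

Lemma foldr_push_nseq a j i t : i != j ->
  foldr push (i :: t) (nseq a j) = if odd a then j :: i :: t else i :: t.
Proof.
move=> ne; elim: a => //= a IH; rewrite IH; case: (odd a) => /=.
  by rewrite eqxx.
by rewrite eq_sym (negbTE ne).
Qed.

Lemma mem_le_sumn x w : x \in w -> x <= sumn w.
Proof.
elim: w => //= y w IH; rewrite inE => /orP[/eqP->|/IH]; first exact: leq_addr.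
move=> h; exact: (leq_trans h (leq_addl _ _)).
Qed.

Lemma map_small (n : nat) (f : nat -> nat) w : (forall x, x \in w -> x < n) ->
  map (fun k => if k < n then f k else k) w = map f w.
Proof. move=> H; apply/eq_in_map => x /H /= ->. done. Qed.

Lemma Evn_inv : S0_invariant Evn.
Proof.
move=> phi; elim => [n i|k|f g _ IHf _ IHg] w.
- move=> [_ Hw]; split; first exact: red_reduced.
  by rewrite /fin_ident /letter_endo odd_size_red size_map.
- move=> [_ Hw]; split; first exact: red_reduced.
  by rewrite /conj_gen odd_size_red /= size_cat addn1 /= negbK.
- by move=> /IHg /IHf.
Qed.

Theorem mainTheorem6 :
  (is_subgroup Evn /\ is_proper Evn /\ S0_invariant Evn) /\
  (forall H : word -> Prop, is_subgroup H -> S0_invariant H -> is_proper H ->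
     forall w, H w -> Evn w) /\
  (forall H : word -> Prop, is_subgroup H -> S0_invariant H ->
     (forall w, H w -> Evn w) -> (exists w, Evn w /\ ~ H w) ->
     forall w, H w -> forall i : nat, count_mem i w != 1).
Proof.
split; [split; [|split]|split].
- split.
  + by move=> w [].
  + by [].
  + move=> u v [_ Hu] [_ Hv]; split; first exact: red_reduced.
    by rewrite /gmul odd_size_red size_cat oddD (negbTE Hu) (negbTE Hv).
  + move=> u [_ Hu]; split; first exact: red_reduced.
    by rewrite /ginv odd_size_red size_rev.
- exists [:: 0]; split => //; by case.
- exact: Evn_inv.
- move=> H [Hred H1 Hmul Hinv] Hinv0 [w0 [Rw0 Nw0]] w Hw.
  split; first exact: Hred.
  apply/negP => Hodd; apply: Nw0.
  set n := (sumn w).+1.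
  have Hlt : forall x, x \in w -> x < n by move=> x /mem_le_sumn.
  have H0 : H [:: 0].
    have := Hinv0 _ (S0_ident n (fun _ => 0)) _ Hw.
    rewrite /fin_ident /letter_endo (@map_small n (fun _ => 0) w) //.
    have -> : map (fun _ => 0) w = nseq (size w) 0.
      by elim: (w) => //= x l ->.
    by rewrite red_nseq Hodd.
  have Hx : forall x, H [:: x].
    move=> x; have := Hinv0 _ (S0_ident 1 (fun _ => x)) _ H0; done.
  elim: w0 Rw0 => // x u IH Ru.
  have := Hmul _ _ (Hx x) (IH (reduced_tail Ru)).
  by rewrite /gmul cat1s (red_id Ru).
- move=> H [Hred H1 Hmul Hinv] Hinv0 HE [w0 [Ew0 Nw0]] w Hw i.
  apply/negP => /eqP Hc; apply: Nw0.
  have iw : i \in w by rewrite -has_pred1 has_count Hc.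
  set j := i.+1.
  have nij : i != j by rewrite /j neq_ltn ltnSn.
  have Hpair : exists p q, p != q /\ H [:: p; q].
    move: Hw Hc; case/splitPr: iw => p1 p2 Hw Hc.
    rewrite count_cat /= eqxx add1n addnS in Hc.
    case: Hc => /eqP; rewrite addn_eq0 => /andP[/eqP c1 /eqP c2].
    have n1 : i \notin p1 by apply/count_memPn.
    have n2 : i \notin p2 by apply/count_memPn.
    set ww := p1 ++ i :: p2 in Hw.
    set n := (sumn ww).+1.
    have Hlt : forall x, x \in ww -> x < n by move=> x /mem_le_sumn.
    pose f := fun k => if k == i then i else j.
    have := Hinv0 _ (S0_ident n f) _ Hw.
    rewrite /fin_ident /letter_endo (@map_small n f ww) //.
    have mn : forall l, i \notin l -> map f l = nseq (size l) j.
      elim => //= x l IH; rewrite inE negb_or => /andP[ne /IH ->].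
      by rewrite /f eq_sym (negbTE ne).
    rewrite /ww map_cat /= mn // mn // {1}/f eqxx /red foldr_cat.
    have E2 := red_nseq (size p2) j; rewrite /red in E2; rewrite [foldr push [::] (i :: _)]/= E2.
    have Hev := (HE _ Hw).2.
    rewrite /ww size_cat /= addnS /= oddD negb_add in Hev.
    case: (odd (size p2)) Hev => /=; rewrite ?(negbTE nij) foldr_push_nseq //;
      case: (odd (size p1)) => //= _ Hp.
    + by exists i, j.
    + by exists j, i; split => //; rewrite eq_sym.
  case: Hpair => p [q [npq Hpq]].
  have Hxy : forall x y, x != y -> H [:: x; y].
    move=> x y nxy.
    pose f := fun k => if k == p then x else y.
    have := Hinv0 _ (S0_ident (maxn p q).+1 f) _ Hpq.
    rewrite /fin_ident /letter_endo /= !ltnS leq_maxl leq_maxr /f eqxx.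
    by rewrite eq_sym in npq; rewrite (negbTE npq) (negbTE nxy).
  case: Ew0 => R0 E0.
  have : forall m u, size u = m.*2 -> reduced u -> H u.
    elim => [|m IH] [|x [|y u]] //= [Hs] /andP[nxy Ru].
    have := Hmul _ _ (Hxy _ _ nxy) (IH u Hs (reduced_tail Ru)).
    by rewrite /gmul cat_cons cat1s red_id //= nxy.
  move/(_ (size w0)./2 w0); apply => //.
  by rewrite -[LHS](odd_double_half (size w0)) (negbTE E0).
Qed.
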